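(* Let $p$ be a prime, $n\ge1$, $d\ge2$, ${\bf a}_1,\dots,{\bf a}_N\in\mathbb{N}^{n+1}$ with coordinate sums $d$, and $I\subseteq\{0,1,\dots,n\}$. If $u,v\in U^I_{\min}$, $\nu\in\mathbb{N}^N$, and $\sum_{j=1}^N\nu_j{\bf a}_j^+=pu-v$, then $\nu_j\le p-1$ for all $j$.
   Context: ${\bf a}_j^+=({\bf a}_j,1)\in\mathbb{N}^{n+2}$. The integer $\mu_I$ is defined by $\lceil|I|/d\rceil=\mu_I+1$. $U^I$ is the set of $u=(u_0,\dots,u_{n+1})\in\mathbb{N}^{n+2}$ with $\sum_{i=0}^nu_i=du_{n+1}$ and $u_i>0$ for all $i\in I$, and $U^I_{\min}=\{u\in U^I:u_{n+1}=\mu_I+1\}$. *)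

(* Defs.v *)
From mathcomp Require Import all_boot all_order all_algebra.
Set Implicit Arguments. Unset Strict Implicit. Unset Printing Implicit Defensive.
Import GRing.Theory Num.Theory.

(* Vectors in N^{n+1} are functions 'I_n.+1 -> nat (coordinates 0..n);
   vectors in N^{n+2} are functions 'I_n.+2 -> nat (coordinates 0..n+1). *)

(* a^+ = (a, 1) in N^{n+2} *)
Definition aplus (n : nat) (a : 'I_n.+1 -> nat) : 'I_n.+2 -> nat :=
  fun k => if (k < n.+1)%N then a (inord k) else 1%N.

Definition ceil_div (m d : nat) : nat := ((m + d.-1) %/ d)%N.

Definition muI_plus1 (n d : nat) (I : {set 'I_n.+1}) : nat := ceil_div #|I| d.

Definition in_UI (n d : nat) (I : {set 'I_n.+1}) (u : 'I_n.+2 -> nat) : Prop :=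
  (\sum_(i < n.+1) u (widen_ord (leqnSn n.+1) i) = d * u ord_max)%N /\
  (forall i : 'I_n.+1, i \in I -> (0 < u (widen_ord (leqnSn n.+1) i))%N).

Definition in_UImin (n d : nat) (I : {set 'I_n.+1}) (u : 'I_n.+2 -> nat) : Prop :=
  in_UI d I u /\ u ord_max = muI_plus1 d I.

(* Main.v *)
Require Import Defs.
From mathcomp Require Import all_boot all_order all_algebra.
From mathcomp Require Import zify.
Import GRing.Theory Num.Theory.

Theorem lemma2p1 (p n d N : nat) (a : 'I_N -> 'I_n.+1 -> nat)
  (I : {set 'I_n.+1}) (u v : 'I_n.+2 -> nat) (nu : 'I_N -> nat) :
  prime p -> (1 <= n)%N -> (2 <= d)%N ->
  (forall j : 'I_N, (\sum_(i < n.+1) a j i)%N = d) ->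
  in_UImin d I u -> in_UImin d I v ->
  (forall k : 'I_n.+2,
     (Posz (\sum_(j < N) nu j * aplus (a j) k)%N = Posz (p * u k)%N - Posz (v k))%R) ->
  forall j : 'I_N, (nu j <= p - 1)%N.
Proof.
move=> pp n1 d2 Ha [[Usum Upos] Um] [[Vsum Vpos] Vm] H j0.
have p2 := prime_gt1 pp.
rewrite leqNgt; apply/negP => Hnu.
have key : forall k, (p * aplus (a j0) k + v k <= p * u k)%N.
  move=> k; have := H k; move/eqP; rewrite eq_sym subr_eq -PoszD => /eqP [->].
  rewrite leq_add2r (bigD1 j0) //=.
  apply: leq_trans (leq_addr _ _); apply: leq_mul => //; lia.
have am : forall j, aplus (a j) ord_max = 1%N.
  by move=> j; rewrite /aplus /= ltnn.
have aw : forall j (i : 'I_n.+1), aplus (a j) (widen_ord (leqnSn n.+1) i) = a j i.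
  move=> j i; rewrite /aplus /= ltn_ord; congr (a j _); apply: val_inj => /=.
  by rewrite inordK.
have km := key ord_max; rewrite am Um Vm in km.
have hs : (\sum_(i < n.+1) (a j0 i + (if i \in I then 1 else 0))
           <= \sum_(i < n.+1) u (widen_ord (leqnSn n.+1) i))%N.
  apply: leq_sum => i _.
  have := key (widen_ord (leqnSn n.+1) i); rewrite aw.
  case: ifP => iI.
    have := Vpos i iI => vp kk.
    suff : (p * a j0 i < p * u (widen_ord (leqnSn n.+1) i))%N.
      by rewrite ltn_pmul2l ?addn1 //; lia.
    lia.
  move=> kk; rewrite addn0.
  have : (p * a j0 i <= p * u (widen_ord (leqnSn n.+1) i))%N by lia.
  by rewrite leq_pmul2l //; lia.
rewrite big_split /= -big_mkcond /= sum1_card Ha Usum Um in hs.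
move: km hs; rewrite /muI_plus1 /ceil_div => km hs.
have := leq_trunc_div (#|I| + d.-1) d.
rewrite mulnC => hd.
set m := ((#|I| + d.-1) %/ d)%N in km hs hd.
have : (#|[pred i | i \in I]| = #|I|)%N by apply: eq_card.
move=> ce; rewrite ce in hs.
lia.
Qed.
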